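(* There exists $k_0$ such that for every $k\ge k_0$, every isothetic drawing of the Horton set of $n=2^k$ points has size at least $n^{\frac18\log n}$.
   Context: All logarithms are base 2. For a finite set $S$ of points in the plane with pairwise distinct $x$-coordinates, list its points in increasing order of $x$-coordinate as $p_0,\dots,p_{|S|-1}$ and set $S_{\mathrm{even}}=\{p_0,p_2,\dots\}$, $S_{\mathrm{odd}}=\{p_1,p_3,\dots\}$. For point sets $X,Y$, $X$ is high above $Y$ if every line through two points of $X$ lies strictly above every point of $Y$ and every line through two points of $Y$ lies strictly below every point of $X$. A Horton set of $2^k$ points is defined recursively: a set $H$ of $2^k$ points, no three collinear, with pairwise distinct $x$-coordinates, such that for $k=0$ it is a single point and for $k\ge1$ both $H_{\mathrm{even}}$ and $H_{\mathrm{odd}}$ are Horton sets of $2^{k-1}$ points and $H_{\mathrm{odd}}$ is high above $H_{\mathrm{even}}$. An isothetic drawing of the Horton set of $n=2^k$ points is a Horton set of $n$ points all of whose points have integer coordinates. The size of a set of points is the maximum absolute value of the coordinates of its points. *)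

(* Defs.v *)
From Stdlib Require Import Reals ZArith List Sorted.
Import ListNotations.

Definition point := (Z * Z)%type.

(* A finite point set with pairwise distinct x-coordinates is represented
   by the list of its points in strictly increasing order of x. *)
Definition xsorted (l : list point) : Prop :=
  Sorted (fun p q : point => (fst p < fst q)%Z) l.

Fixpoint evens (l : list point) : list point :=
  match l with
  | [] => []
  | [a] => [a]
  | a :: _ :: t => a :: evens t
  end.

Fixpoint odds (l : list point) : list point :=
  match l with
  | [] => []
  | [_] => []
  | _ :: b :: t => b :: odds t
  end.

Definition orient (a b c : point) : Z :=
  ((fst b - fst a) * (snd c - snd a) - (snd b - snd a) * (fst c - fst a))%Z.

Definition no_three_collinear (l : list point) : Prop :=
  forall p q r, In p l -> In q l -> In r l ->
    p <> q -> q <> r -> p <> r -> orient p q r <> 0%Z.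

(* the (non-vertical) line through a and b lies strictly above c *)
Definition line_above (a b c : point) : Prop :=
  (orient a b c * (fst b - fst a) < 0)%Z.

(* the (non-vertical) line through a and b lies strictly below c *)
Definition line_below (a b c : point) : Prop :=
  (0 < orient a b c * (fst b - fst a))%Z.

Definition high_above (X Y : list point) : Prop :=
  (forall a b c, In a X -> In b X -> a <> b -> In c Y -> line_above a b c) /\
  (forall a b c, In a Y -> In b Y -> a <> b -> In c X -> line_below a b c).

Fixpoint horton_rec (k : nat) (l : list point) : Prop :=
  match k with
  | O => length l = 1%nat
  | S k' => horton_rec k' (evens l) /\ horton_rec k' (odds l) /\
            high_above (odds l) (evens l)
  end.

(* Horton set of 2^k points (with integer coordinates = isothetic drawing) *)
Definition is_horton (k : nat) (l : list point) : Prop :=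
  xsorted l /\ no_three_collinear l /\ length l = Nat.pow 2 k /\ horton_rec k l.

Definition size (l : list point) : Z :=
  fold_right (fun p m => Z.max m (Z.max (Z.abs (fst p)) (Z.abs (snd p)))) 0%Z l.

Definition log2R (x : R) : R := (ln x / ln 2)%R.

(* Main.v *)
Require Import Defs.
From Stdlib Require Import Reals ZArith List Sorted Lia Lra Classical Arith.
Import ListNotations.


Lemma nth_odds : forall (l : list point) i d, nth i (odds l) d = nth (2*i+1) l d.
Proof.
  fix IH 1. intros l i d. destruct l as [|a [|b t]].
  - destruct i; reflexivity.
  - destruct i as [|i]; [reflexivity|]. replace (2 * S i + 1) with (S (S (2*i+1))) by lia.
    destruct i; reflexivity.
  - destruct i as [|i]; [reflexivity|].
    simpl odds. change (nth (S i) (b :: odds t) d) with (nth i (odds t) d).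
    rewrite IH. replace (2 * S i + 1) with (S (S (2*i+1))) by lia. reflexivity.
Qed.

Lemma nth_evens : forall (l : list point) i d, nth i (evens l) d = nth (2*i) l d.
Proof.
  fix IH 1. intros l i d. destruct l as [|a [|b t]].
  - destruct i; reflexivity.
  - destruct i as [|i]; [reflexivity|]. replace (2 * S i) with (S (S (2*i))) by lia.
    destruct i; reflexivity.
  - destruct i as [|i]; [reflexivity|].
    simpl evens. change (nth (S i) (a :: evens t) d) with (nth i (evens t) d).
    rewrite IH. replace (2 * S i) with (S (S (2*i))) by lia. reflexivity.
Qed.

Lemma len_odds : forall (l : list point) i, 2*i+1 < length l -> i < length (odds l).
Proof.
  fix IH 1. intros l i H. destruct l as [|a [|b t]]; simpl in *; try lia.
  destruct i as [|i]; [lia|]. specialize (IH t i ltac:(lia)). lia.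
Qed.

Lemma len_evens : forall (l : list point) i, 2*i < length l -> i < length (evens l).
Proof.
  fix IH 1. intros l i H. destruct l as [|a [|b t]]; simpl in *; try lia.
  destruct i as [|i]; [lia|]. specialize (IH t i ltac:(lia)). lia.
Qed.

Lemma length_odds_evens : forall (l : list point),
  length (odds l) = Nat.div2 (length l) /\ length (evens l) = Nat.div2 (S (length l)).
Proof.
  fix IH 1. intros l. destruct l as [|a [|b t]]; simpl; try (split; reflexivity).
  destruct (IH t) as [H1 H2]. rewrite H1, H2. split; reflexivity.
Qed.

Lemma In_odds (l : list point) i d : 2*i+1 < length l -> In (nth (2*i+1) l d) (odds l).
Proof. intro H. rewrite <- nth_odds. apply nth_In. apply len_odds; auto. Qed.

Lemma In_evens (l : list point) i d : 2*i < length l -> In (nth (2*i) l d) (evens l).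
Proof. intro H. rewrite <- nth_evens. apply nth_In. apply len_evens; auto. Qed.

Fixpoint oddsN (t : nat) (l : list point) : list point :=
  match t with O => l | S t' => odds (oddsN t' l) end.

Lemma nth_oddsN : forall t l j d, nth j (oddsN t l) d = nth (2^t*(j+1) - 1) l d.
Proof.
  induction t; intros l j d.
  - simpl. f_equal. lia.
  - simpl oddsN. rewrite nth_odds, IHt. f_equal.
    rewrite Nat.pow_succ_r'. nia.
Qed.

Lemma horton_oddsN : forall t k l, t <= k -> length l = 2^k -> horton_rec k l ->
  horton_rec (k - t) (oddsN t l) /\ length (oddsN t l) = 2^(k-t).
Proof.
  induction t; intros k l Ht Hl Hh.
  - simpl. rewrite Nat.sub_0_r. auto.
  - destruct (IHt k l ltac:(lia) Hl Hh) as [H1 H2].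
    simpl oddsN. replace (k - t) with (S (k - S t)) in H1, H2 by lia.
    simpl in H1. destruct H1 as [_ [H3 _]]. split; auto.
    destruct (length_odds_evens (oddsN t l)) as [E _]. rewrite E, H2.
    rewrite Nat.pow_succ_r'. apply Nat.div2_double.
Qed.


Definition Pt (l : list point) (m : nat) : point := nth (m - 1) l (0%Z, 0%Z).
Definition Xt (l : list point) (m : nat) : Z := fst (Pt l m).
Definition Yt (l : list point) (m : nat) : Z := snd (Pt l m).

Lemma sorted_nth : forall (l : list point), xsorted l ->
  forall i j, i < j < length l -> (fst (nth i l (0%Z,0%Z)) < fst (nth j l (0%Z,0%Z)))%Z.
Proof.
  intros l Hs. unfold xsorted in Hs.
  apply Sorted_StronglySorted in Hs; [| intros x y z; lia].
  induction Hs as [|a t Hs IH HF]; intros i j Hij; simpl in Hij; [lia|].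
  destruct i as [|i]; destruct j as [|j]; try lia.
  - simpl. rewrite Forall_forall in HF. apply HF. apply nth_In. lia.
  - simpl. apply IH. lia.
Qed.

Lemma Xt_lt (l : list point) (n a b : nat) : xsorted l -> length l = n ->
  1 <= a -> a < b -> b <= n -> (Xt l a < Xt l b)%Z.
Proof.
  intros Hs Hl Ha Hab Hb. unfold Xt, Pt. apply sorted_nth; auto. lia.
Qed.

Lemma Pt_neq (l : list point) (n a b : nat) : xsorted l -> length l = n ->
  1 <= a -> a < b -> b <= n -> Pt l a <> Pt l b.
Proof.
  intros. intro E. pose proof (Xt_lt l n a b H H0 H1 H2 H3). unfold Xt in H4. rewrite E in H4. lia.
Qed.

Lemma size_bound : forall (l : list point) q, In q l ->
  (Z.abs (fst q) <= size l /\ Z.abs (snd q) <= size l)%Z.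
Proof.
  induction l as [|a t IH]; intros q Hq; simpl in Hq; [contradiction|].
  simpl. destruct Hq as [<-|Hq].
  - lia.
  - destruct (IH q Hq). lia.
Qed.

Lemma Pt_bound (l : list point) (a : nat) : 1 <= a -> a <= length l ->
  (Z.abs (Xt l a) <= size l /\ Z.abs (Yt l a) <= size l)%Z.
Proof.
  intros. unfold Xt, Yt, Pt. apply size_bound. apply nth_In. lia.
Qed.

Lemma HA_gen (k : nat) (l : list point) (t : nat) : length l = 2^k -> horton_rec k l -> t < k ->
  high_above (odds (oddsN t l)) (evens (oddsN t l)) /\ length (oddsN t l) = 2^(k-t).
Proof.
  intros Hl Hh Ht. destruct (horton_oddsN t k l ltac:(lia) Hl Hh) as [H1 H2].
  replace (k - t) with (S (k - S t)) in H1 by lia. simpl in H1. tauto.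
Qed.

Lemma pow_split (t k : nat) : t <= k -> 2^k = 2^t * 2^(k-t).
Proof. intro. rewrite <- Nat.pow_add_r. f_equal. lia. Qed.

Lemma HA_above (k : nat) (l : list point) (t i j w : nat) :
  xsorted l -> length l = 2^k -> horton_rec k l -> t < k ->
  1 <= i -> 1 <= j -> i <> j -> 2^(S t)*i <= 2^k -> 2^(S t)*j <= 2^k -> 2^t*(2*w+1) <= 2^k ->
  line_above (Pt l (2^(S t)*i)) (Pt l (2^(S t)*j)) (Pt l (2^t*(2*w+1))).
Proof.
  intros Hs Hl Hh Ht Hi Hj Hij Bi Bj Bw.
  destruct (HA_gen k l t Hl Hh Ht) as [[HA _] Hlen].
  pose proof (pow_split t k ltac:(lia)) as E.
  assert (Hd : 2^t > 0) by (apply Nat.neq_0_lt_0, Nat.pow_nonzero; lia).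
  rewrite Nat.pow_succ_r' in *.
  set (D := 2^t) in *. set (N := 2^(k-t)) in *.
  assert (Ea : Pt l (2*D*i) = nth (2*(i-1)+1) (oddsN t l) (0%Z,0%Z)).
  { unfold Pt. rewrite nth_oddsN. f_equal; try (fold D; nia). }
  assert (Eb : Pt l (2*D*j) = nth (2*(j-1)+1) (oddsN t l) (0%Z,0%Z)).
  { unfold Pt. rewrite nth_oddsN. f_equal; try (fold D; nia). }
  assert (Ec : Pt l (D*(2*w+1)) = nth (2*w) (oddsN t l) (0%Z,0%Z)).
  { unfold Pt. rewrite nth_oddsN. f_equal; try (fold D; nia). }
  rewrite Ea, Eb, Ec. apply HA.
  - apply In_odds. rewrite Hlen. fold N. nia.
  - apply In_odds. rewrite Hlen. fold N. nia.
  - rewrite <- Ea, <- Eb.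
    destruct (Nat.lt_total i j) as [L|[L|L]]; [| lia |].
    + apply (Pt_neq l (2^k)); auto; nia.
    + intro Q; symmetry in Q; revert Q. apply (Pt_neq l (2^k)); auto; nia.
  - apply In_evens. rewrite Hlen. fold N. nia.
Qed.

Lemma HA_below (k : nat) (l : list point) (t i j w : nat) :
  xsorted l -> length l = 2^k -> horton_rec k l -> t < k ->
  i <> j -> 2^t*(2*i+1) <= 2^k -> 2^t*(2*j+1) <= 2^k -> 1 <= w -> 2^(S t)*w <= 2^k ->
  line_below (Pt l (2^t*(2*i+1))) (Pt l (2^t*(2*j+1))) (Pt l (2^(S t)*w)).
Proof.
  intros Hs Hl Hh Ht Hij Bi Bj Hw Bw.
  destruct (HA_gen k l t Hl Hh Ht) as [[_ HA] Hlen].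
  pose proof (pow_split t k ltac:(lia)) as E.
  assert (Hd : 2^t > 0) by (apply Nat.neq_0_lt_0, Nat.pow_nonzero; lia).
  rewrite Nat.pow_succ_r' in *.
  set (D := 2^t) in *. set (N := 2^(k-t)) in *.
  assert (Ea : Pt l (D*(2*i+1)) = nth (2*i) (oddsN t l) (0%Z,0%Z)).
  { unfold Pt. rewrite nth_oddsN. f_equal; try (fold D; nia). }
  assert (Eb : Pt l (D*(2*j+1)) = nth (2*j) (oddsN t l) (0%Z,0%Z)).
  { unfold Pt. rewrite nth_oddsN. f_equal; try (fold D; nia). }
  assert (Ec : Pt l (2*D*w) = nth (2*(w-1)+1) (oddsN t l) (0%Z,0%Z)).
  { unfold Pt. rewrite nth_oddsN. f_equal; try (fold D; nia). }
  rewrite Ea, Eb, Ec. apply HA.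
  - apply In_evens. rewrite Hlen. fold N. nia.
  - apply In_evens. rewrite Hlen. fold N. nia.
  - rewrite <- Ea, <- Eb.
    destruct (Nat.lt_total i j) as [L|[L|L]]; [| lia |].
    + apply (Pt_neq l (2^k)); auto; nia.
    + intro Q; symmetry in Q; revert Q. apply (Pt_neq l (2^k)); auto; nia.
  - apply In_odds. rewrite Hlen. fold N. nia.
Qed.


Lemma pow_ge (L : nat) : 8 <= L -> 12*L + 37 <= 2^L.
Proof.
  intro H. induction L as [|L IH]; [lia|].
  destruct (Nat.eq_dec L 7) as [->|Hn]; [simpl; lia|].
  specialize (IH ltac:(lia)). rewrite Nat.pow_succ_r'. lia.
Qed.

Lemma params (k : nat) : 256 <= k -> k < 2^(Nat.log2 k + 1) /\ 12*(Nat.log2 k + 1) + 25 <= k.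
Proof.
  intro Hk. destruct (Nat.log2_spec k ltac:(lia)) as [H1 H2].
  assert (HL : 8 <= Nat.log2 k).
  { replace 8 with (Nat.log2 (2^8)) by reflexivity. apply Nat.log2_le_mono. simpl. lia. }
  pose proof (pow_ge _ HL). rewrite Nat.add_1_r. lia.
Qed.

Lemma Gclosed (ef : nat -> nat) (k T c : nat) (G : nat -> nat) :
  (forall t, ef t = k - t - c) -> T + c <= k ->
  G 0 = 0 -> (forall j, G (S j) = G j + ef (T - S j)) ->
  forall j, j <= T -> 2 * G j = j * (2 * (k - c - T + 1)) + j * (j - 1).
Proof.
  intros Hef HT G0 GS. induction j; intros Hj.
  - rewrite G0. lia.
  - rewrite GS, Hef. specialize (IHj ltac:(lia)).
    replace (k - (T - S j) - c) with ((k - c - T + 1) + j) by lia.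
    destruct j; simpl in *; nia.
Qed.

Lemma final_ineq (k r T G : nat) : 12*r + 25 <= k -> 2*T <= k -> k <= 2*T+1 ->
  2 * G = T * (2 * (k - (3*r+5) - T + 1)) + T * (T - 1) -> k*k + 8 <= 4 * G.
Proof.
  intros H1 H2 H3 HG.
  assert (T >= 6*r+12) by lia.
  replace (k - (3*r+5) - T + 1) with (k - 3*r - 4 - T) in HG by lia.
  assert (E : 4*G = 2*T*(2*(k - 3*r - 4 - T)) + 2*T*(T-1)) by lia.
  assert (2*T*T >= 12*r*T + 24*T) by nia.
  nia.
Qed.

Open Scope R_scope.

Definition ori (ax ay bx by0 cx cy : R) : R := (bx-ax)*(cy-ay) - (by0-ay)*(cx-ax).

Lemma devA_R (xc yc xc' yc' xp yp x1 y1 x2 y2 x3 y3 : R) :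
  xc < xp -> xp < xc' -> x1 < x3 -> x2 < x3 -> x3 < xp ->
  ori x2 y2 x3 y3 xc yc < 0 -> ori x2 y2 x3 y3 xc' yc' < 0 -> 0 < ori x1 y1 x3 y3 xp yp ->
  ori x1 y1 x3 y3 x2 y2 / (x3 - x1) * ((xp - x3)/(x3 - x2)) <= ori xc yc xc' yc' xp yp / (xc' - xc).
Proof.
  intros H1 H2 H3 H4 H5 O1 O2 O3.
  assert (E : ori xc yc xc' yc' xp yp / (xc' - xc) =
    ori x1 y1 x3 y3 x2 y2 / (x3 - x1) * ((xp - x3)/(x3 - x2)) + ori x1 y1 x3 y3 xp yp / (x3 - x1)
    - (ori x2 y2 x3 y3 xc yc * (xc' - xp) + ori x2 y2 x3 y3 xc' yc' * (xp - xc)) / ((xc' - xc) * (x3 - x2))).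
  { unfold ori. field. repeat split; lra. }
  rewrite E.
  assert (0 < ori x1 y1 x3 y3 xp yp / (x3 - x1)) by (apply Rdiv_lt_0_compat; lra).
  assert ((ori x2 y2 x3 y3 xc yc * (xc' - xp) + ori x2 y2 x3 y3 xc' yc' * (xp - xc)) / ((xc' - xc) * (x3 - x2)) < 0).
  { apply Rdiv_neg_pos. 2: apply Rmult_lt_0_compat; lra.
    assert (ori x2 y2 x3 y3 xc yc * (xc' - xp) < 0) by (apply Rmult_neg_pos; lra).
    assert (ori x2 y2 x3 y3 xc' yc' * (xp - xc) < 0) by (apply Rmult_neg_pos; lra). lra. }
  lra.
Qed.

Definition dev3 (a b q : point) : R := IZR (orient a b q) / IZR (fst b - fst a).

Lemma orient_R (a b c : point) : IZR (orient a b c) =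
  ori (IZR (fst a)) (IZR (snd a)) (IZR (fst b)) (IZR (snd b)) (IZR (fst c)) (IZR (snd c)).
Proof. unfold orient, ori. rewrite minus_IZR, !mult_IZR, !minus_IZR. reflexivity. Qed.

Lemma devA (c c' p v1 p2 v2 : point) :
  (fst c < fst p)%Z -> (fst p < fst c')%Z -> (fst v1 < fst v2)%Z -> (fst p2 < fst v2)%Z -> (fst v2 < fst p)%Z ->
  line_above p2 v2 c -> line_above p2 v2 c' -> line_below v1 v2 p ->
  dev3 v1 v2 p2 * (IZR (fst p - fst v2) / IZR (fst v2 - fst p2)) <= dev3 c c' p.
Proof.
  intros H1 H2 H3 H4 H5 A1 A2 B.
  unfold line_above, line_below in *.
  assert (O1 : (orient p2 v2 c < 0)%Z) by nia.
  assert (O2 : (orient p2 v2 c' < 0)%Z) by nia.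
  assert (O3 : (0 < orient v1 v2 p)%Z) by nia.
  apply IZR_lt in O1, O2, O3. rewrite orient_R in O1, O2, O3.
  apply IZR_lt in H1, H2, H3, H4, H5.
  unfold dev3. rewrite !orient_R, !minus_IZR.
  apply devA_R; auto.
Qed.

Open Scope R_scope.

Definition Stmt (l : list point) (k t V : nat) (L : R) : Prop :=
  forall w, (V <= w)%nat -> (2^(t+2)*w + 2^t <= 2^k)%nat ->
    L <= dev3 (Pt l (2^(t+2)*w - 2^t)) (Pt l (2^(t+2)*w + 2^t)) (Pt l (2^(t+2)*w)).

Lemma pw (t : nat) : (2^(t+2) = 4*2^t /\ 2^(S t + 2) = 8*2^t /\ 2^(S t) = 2*2^t /\ 2^(S (S t)) = 4*2^t
   /\ 2^t > 0)%nat.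
Proof.
  assert (2^t > 0)%nat by (apply Nat.neq_0_lt_0, Nat.pow_nonzero; lia).
  rewrite !Nat.pow_add_r, !Nat.pow_succ_r'. simpl. lia.
Qed.

Lemma step (l : list point) (k t V' M : nat) (L' lam : R) :
  xsorted l -> length l = (2^k)%nat -> horton_rec k l -> (t + 2 <= k)%nat ->
  (1 <= V')%nat -> 0 <= L' -> (1 <= M)%nat -> 0 < lam ->
  IZR (2 * size l) < (1 + / lam)^(M-1) ->
  Stmt l k (S t) V' L' -> Stmt l k t (2*(V'+M)) (lam * L').
Proof.
  intros Hs Hl Hh Ht HV HL HM Hlam Hbig HS w Hw Hb.
  destruct (pw t) as [E1 [E2 [E3 [E4 HD]]]].
  rewrite E1 in *. set (D := (2^t)%nat) in *.
  set (n := (2^k)%nat) in *.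
  set (a := fun i : nat => IZR (Xt l (4*D*w) - Xt l (8*D*(V'+i) + 2*D))).
  set (b := fun i : nat => IZR (Xt l (8*D*(V'+i) + 2*D) - Xt l (8*D*(V'+i)))).
  assert (Hlt : forall x y, (1 <= x)%nat -> (x < y)%nat -> (y <= n)%nat -> (Xt l x < Xt l y)%Z).
  { intros x y Hx Hxy Hy. apply (Xt_lt l n); auto. }
  assert (Hex : exists i, (i < M)%nat /\ lam * b i <= a i).
  { apply NNPP. intro Hne.
    assert (Hall : forall i, (i < M)%nat -> a i < lam * b i).
    { intros i Hi. apply Rnot_le_lt. intro C. apply Hne. exists i. auto. }
    assert (Hind : forall j, (j < M)%nat -> (1 + / lam)^j <= a (M - 1 - j)%nat).
    { induction j as [|j IH]; intros Hj.
      - simpl. unfold a. apply IZR_le.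
        assert (Xt l (8 * D * (V' + (M - 1 - 0)) + 2 * D) < Xt l (4 * D * w))%Z by (apply Hlt; nia).
        lia.
      - specialize (IH ltac:(lia)).
        set (i := (M - 1 - j)%nat) in *.
        replace (M - 1 - S j)%nat with (i - 1)%nat by lia.
        assert (Hab : a i + b i <= a (i - 1)%nat).
        { unfold a, b. rewrite <- plus_IZR. apply IZR_le.
          assert (Xt l (8 * D * (V' + (i - 1)) + 2 * D) < Xt l (8 * D * (V' + i)))%Z by (apply Hlt; nia).
          lia. }
        specialize (Hall i ltac:(lia)).
        assert (a i / lam < b i).
        { apply (Rmult_lt_reg_l lam); auto. field_simplify; lra. }
        assert (0 <= (1 + / lam) ^ j) by (apply pow_le; pose proof (Rinv_0_lt_compat lam Hlam); lra).
        simpl. 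
        assert ((1 + / lam) * (1 + / lam) ^ j <= (1 + / lam) * a i).
        { apply Rmult_le_compat_l; auto. pose proof (Rinv_0_lt_compat lam Hlam); lra. }
        assert ((1 + / lam) * a i = a i + a i / lam) by (field; lra).
        lra. }
    specialize (Hind (M - 1)%nat ltac:(lia)). replace (M - 1 - (M - 1))%nat with 0%nat in Hind by lia.
    assert (a 0%nat <= IZR (2 * size l)).
    { unfold a. apply IZR_le.
      destruct (Pt_bound l (4*D*w) ltac:(nia) ltac:(rewrite Hl; fold n; nia)).
      destruct (Pt_bound l (8 * D * (V' + 0) + 2 * D) ltac:(nia) ltac:(rewrite Hl; fold n; nia)).
      lia. }
    lra. }
  destruct Hex as [i [Hi Hgood]].
  set (w' := (V' + i)%nat).
  specialize (HS w' ltac:(unfold w'; lia)).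
  rewrite E2, E3 in HS. fold D in HS.
  specialize (HS ltac:(unfold w'; nia)).
  assert (Hbpos : 0 < b i).
  { unfold b. apply IZR_lt. assert (Xt l (8*D*(V'+i)) < Xt l (8*D*(V'+i) + 2*D))%Z by (apply Hlt; nia). lia. }
  assert (Hrat : lam <= a i / b i).
  { apply (Rmult_le_reg_r (b i)); auto. field_simplify; lra. }
  assert (HdA : dev3 (Pt l (8*D*w' - 2*D)) (Pt l (8*D*w' + 2*D)) (Pt l (8*D*w')) * (a i / b i)
               <= dev3 (Pt l (4*D*w - D)) (Pt l (4*D*w + D)) (Pt l (4*D*w))).
  { unfold a, b. unfold w'.
    assert (Q1 : forall x y, (1 <= x)%nat -> (x < y)%nat -> (y <= n)%nat -> (fst (Pt l x) < fst (Pt l y))%Z)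
      by (intros; apply Hlt; auto).
    apply devA.
    - apply Q1; nia.
    - apply Q1; nia.
    - apply Q1; nia.
    - apply Q1; nia.
    - apply Q1; nia.
    - replace (8*D*(V'+i)+2*D)%nat with (2^(S t)*(4*(V'+i)+1))%nat by (rewrite E3; fold D; nia).
      replace (8*D*(V'+i))%nat with (2^(S t)*(4*(V'+i)))%nat by (rewrite E3; fold D; nia).
      replace (4*D*w - D)%nat with (2^t*(2*(2*w-1)+1))%nat by (fold D; nia).
      apply (HA_above k l t); auto; try lia; rewrite ?E3; fold D; fold n; nia.
    - replace (8*D*(V'+i)+2*D)%nat with (2^(S t)*(4*(V'+i)+1))%nat by (rewrite E3; fold D; nia).
      replace (8*D*(V'+i))%nat with (2^(S t)*(4*(V'+i)))%nat by (rewrite E3; fold D; nia).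
      replace (4*D*w + D)%nat with (2^t*(2*(2*w)+1))%nat by (fold D; nia).
      apply (HA_above k l t); auto; try lia; rewrite ?E3; fold D; fold n; nia.
    - replace (8*D*(V'+i)+2*D)%nat with (2^(S t)*(2*(2*(V'+i))+1))%nat by (rewrite E3; fold D; nia).
      replace (8*D*(V'+i) - 2*D)%nat with (2^(S t)*(2*(2*(V'+i)-1)+1))%nat by (rewrite E3; fold D; nia).
      replace (4*D*w)%nat with (2^(S (S t))*w)%nat by (rewrite E4; fold D; nia).
      apply (HA_below k l (S t)); auto; try lia; rewrite ?E3, ?E4; fold D; fold n; nia. }
  assert (L' * lam <= L' * (a i / b i)) by (apply Rmult_le_compat_l; auto).
  assert (L' * (a i / b i) <= dev3 (Pt l (8*D*w' - 2*D)) (Pt l (8*D*w' + 2*D)) (Pt l (8*D*w')) * (a i / b i)).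
  { apply Rmult_le_compat_r; auto. lra. }
  lra.
Qed.

Open Scope R_scope.

Lemma Stmt_mono l k t V1 V2 L1 L2 : (V2 <= V1)%nat -> L1 <= L2 -> Stmt l k t V2 L2 -> Stmt l k t V1 L1.
Proof. intros HV HL HS w Hw Hb. specialize (HS w ltac:(lia) Hb). lra. Qed.

Lemma base (l : list point) (k T : nat) :
  xsorted l -> length l = (2^k)%nat -> horton_rec k l -> (T < k)%nat ->
  Stmt l k T 1 (/ IZR (2 * size l)).
Proof.
  intros Hs Hl Hh HT w Hw Hb.
  destruct (pw T) as [E1 [E2 [E3 [E4 HD]]]].
  rewrite E1 in *. set (D := (2^T)%nat) in *. set (n := (2^k)%nat) in *.
  assert (HB : line_below (Pt l (4*D*w - D)) (Pt l (4*D*w + D)) (Pt l (4*D*w))).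
  { replace (4*D*w - D)%nat with (2^T*(2*(2*w-1)+1))%nat by (fold D; nia).
    replace (4*D*w + D)%nat with (2^T*(2*(2*w)+1))%nat by (fold D; nia).
    replace (4*D*w)%nat with (2^(S T)*(2*w))%nat by (rewrite E3; fold D; nia).
    apply (HA_below k l T); auto; try lia; rewrite ?E3; fold D; fold n; nia. }
  assert (Hx : (Xt l (4*D*w - D) < Xt l (4*D*w + D))%Z) by (apply (Xt_lt l n); auto; nia).
  destruct (Pt_bound l (4*D*w - D) ltac:(nia) ltac:(rewrite Hl; fold n; nia)).
  destruct (Pt_bound l (4*D*w + D) ltac:(nia) ltac:(rewrite Hl; fold n; nia)).
  unfold line_below in HB. unfold Xt in *.
  set (o := orient (Pt l (4 * D * w - D)) (Pt l (4 * D * w + D)) (Pt l (4 * D * w))) in *.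
  set (dx := (fst (Pt l (4 * D * w + D)) - fst (Pt l (4 * D * w - D)))%Z) in *.
  assert (Ho : (1 <= o)%Z) by nia.
  assert (Hdx : (1 <= dx <= 2 * size l)%Z) by (unfold dx; lia).
  unfold dev3. fold o dx.
  apply IZR_le in Ho. destruct Hdx as [Hd1 Hd2]. apply IZR_le in Hd1, Hd2.
  apply (Rle_trans _ (/ IZR dx)).
  - apply Rinv_le_contravar; lra.
  - unfold Rdiv. rewrite <- (Rmult_1_l (/ IZR dx)) at 1. apply Rmult_le_compat_r; auto.
    left. apply Rinv_0_lt_compat. lra.
Qed.

Lemma top (l : list point) (k w : nat) :
  xsorted l -> length l = (2^k)%nat -> (1 <= w)%nat -> (4*w + 1 <= 2^k)%nat ->
  dev3 (Pt l (4*w - 1)) (Pt l (4*w + 1)) (Pt l (4*w)) <= IZR (2 * size l).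
Proof.
  intros Hs Hl Hw Hb. set (n := (2^k)%nat) in *.
  assert (H1 : (Xt l (4*w - 1) < Xt l (4*w))%Z) by (apply (Xt_lt l n); auto; lia).
  assert (H2 : (Xt l (4*w) < Xt l (4*w + 1))%Z) by (apply (Xt_lt l n); auto; lia).
  destruct (Pt_bound l (4*w - 1) ltac:(lia) ltac:(rewrite Hl; fold n; lia)) as [A1 B1].
  destruct (Pt_bound l (4*w + 1) ltac:(lia) ltac:(rewrite Hl; fold n; lia)) as [A2 B2].
  destruct (Pt_bound l (4*w) ltac:(lia) ltac:(rewrite Hl; fold n; lia)) as [A3 B3].
  unfold Xt, Yt in *. unfold dev3, orient.
  destruct (Pt l (4*w-1)) as [xc yc]. destruct (Pt l (4*w+1)) as [xd yd].
  destruct (Pt l (4*w)) as [xp yp]. cbn [fst snd] in *.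
  assert (Hz : ((xd - xc) * (yp - yc) - (yd - yc) * (xp - xc) <= 2 * size l * (xd - xc))%Z).
  { assert (E : ((xd - xc) * (yp - yc) - (yd - yc) * (xp - xc) =
               (xp - xc) * (yp - yd) + (xd - xp) * (yp - yc))%Z) by ring.
    rewrite E.
    assert ((xp - xc) * (yp - yd) <= (xp - xc) * (2 * size l))%Z by (apply Z.mul_le_mono_nonneg_l; lia).
    assert ((xd - xp) * (yp - yc) <= (xd - xp) * (2 * size l))%Z by (apply Z.mul_le_mono_nonneg_l; lia).
    nia. }
  apply IZR_le in Hz. rewrite mult_IZR in Hz.
  assert (Hp : 0 < IZR (xd - xc)) by (apply IZR_lt; lia).
  apply (Rmult_le_reg_r (IZR (xd - xc))); auto.
  unfold Rdiv. rewrite Rmult_assoc, Rinv_l by lra. lra.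
Qed.

Lemma bern (x : R) (m : nat) : 0 <= x -> 1 + INR m * x <= (1 + x)^m.
Proof.
  intro Hx. induction m.
  - simpl. lra.
  - rewrite S_INR. simpl. pose proof (pos_INR m).
    assert (0 <= INR m * x * x) by (apply Rmult_le_pos; auto; apply Rmult_le_pos; auto).
    nra.
Qed.

Lemma bern2 (e Q m : nat) : (2^e * Q <= m)%nat -> 2^Q <= (1 + / 2^e)^m.
Proof.
  intro H.
  assert (Hp : 0 < 2^e) by (apply pow_lt; lra).
  assert (H1 : 2 <= (1 + / 2^e)^(2^e)).
  { pose proof (bern (/ 2^e) (2^e) ltac:(left; apply Rinv_0_lt_compat; auto)).
    rewrite pow_INR in H0. simpl INR in H0. rewrite Rinv_r in H0 by lra. lra. }
  apply (Rle_trans _ ((1 + / 2^e)^(2^e * Q))).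
  - rewrite pow_mult. apply pow_incr. lra.
  - apply Rle_pow; auto. pose proof (Rinv_0_lt_compat _ Hp). lra.
Qed.

Fixpoint Gf (ef : nat -> nat) (T j : nat) : nat :=
  match j with O => O | S j' => (Gf ef T j' + ef (T - S j'))%nat end.

Lemma iterate (l : list point) (k T K : nat) (Mf ef : nat -> nat) :
  xsorted l -> length l = (2^k)%nat -> horton_rec k l -> (T < k)%nat -> 0 < IZR (2 * size l) ->
  (forall t, (t < T)%nat -> (t + 2 <= k)%nat /\ (1 <= Mf t)%nat /\ (2^(t+3) * Mf t = K)%nat /\
        IZR (2 * size l) < (1 + / 2^(ef t))^(Mf t - 1)) ->
  forall j, (j <= T)%nat -> exists V, (2^((T-j)+2)*V = 2^(T+2) + j*K)%nat /\ (1 <= V)%nat /\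
        Stmt l k (T-j) V (2^(Gf ef T j) / IZR (2 * size l)).
Proof.
  intros Hs Hl Hh HT Hsp Hpar. induction j as [|j IH]; intros Hj.
  - exists 1%nat. rewrite Nat.sub_0_r. split; [lia|]. split; [lia|].
    simpl Gf. unfold Rdiv. rewrite pow_O, Rmult_1_l. apply base; auto.
  - destruct IH as [V [HV1 [HV2 HSt]]]; [lia|].
    set (t := (T - S j)%nat).
    destruct (Hpar t ltac:(unfold t; lia)) as [P1 [P2 [P3 P4]]].
    replace (T - j)%nat with (S t) in HV1, HSt by (unfold t; lia).
    exists (2 * (V + Mf t))%nat. split; [|split; [lia|]].
    + rewrite Nat.pow_add_r in *. rewrite Nat.pow_succ_r' in HV1.
      try rewrite Nat.pow_add_r in P3. simpl in *. nia.
    + simpl Gf. fold t.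
      assert (Hst := step l k t V (Mf t) (2^(Gf ef T j) / IZR (2 * size l)) (2^(ef t)) Hs Hl Hh P1 HV2
        ltac:(unfold Rdiv; apply Rmult_le_pos; [apply pow_le; lra | left; apply Rinv_0_lt_compat; auto]) P2 ltac:(apply pow_lt; lra) P4 HSt).
      eapply Stmt_mono; [| | exact Hst]; [lia|].
      rewrite pow_add. unfold Rdiv. lra.
Qed.

Open Scope R_scope.

Lemma INR2 : INR 2 = 2. Proof. simpl. lra. Qed.

Lemma lhs_eq (k : nat) : Rpower (INR (Nat.pow 2 k)) (/ 8 * log2R (INR (Nat.pow 2 k))) =
  Rpower 2 (INR k * (/ 8 * INR k)).
Proof.
  assert (Hln : 0 < ln 2) by (rewrite <- ln_1; apply ln_increasing; lra).
  assert (E1 : INR (Nat.pow 2 k) = Rpower 2 (INR k)).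
  { rewrite pow_INR, INR2, Rpower_pow by lra. reflexivity. }
  assert (E2 : log2R (INR (Nat.pow 2 k)) = INR k).
  { unfold log2R. rewrite pow_INR, INR2, ln_pow by lra. field. lra. }
  rewrite E2, E1, Rpower_mult. reflexivity.
Qed.

Theorem theorem2 :
  exists k0 : nat, forall k : nat, (k0 <= k)%nat ->
    forall H : list point, is_horton k H ->
      (Rpower (INR (Nat.pow 2 k)) (/ 8 * log2R (INR (Nat.pow 2 k))) <= IZR (size H))%R.
Proof.
  exists 256%nat. intros k Hk H Hhor. destruct Hhor as [Hs [_ [Hl Hh]]].
  rewrite lhs_eq. set (X8 := INR k * (/ 8 * INR k)).
  apply Rnot_lt_le. intro Hlt.
  set (s := size H) in *.
  set (r := (Nat.log2 k + 1)%nat). destruct (params k Hk) as [Hr1 Hr2]. fold r in Hr1, Hr2.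
  set (T := (k / 2)%nat).
  assert (HT : (2*T <= k <= 2*T+1)%nat).
  { pose proof (Nat.div_mod_eq k 2). pose proof (Nat.mod_upper_bound k 2 ltac:(lia)). unfold T. lia. }
  assert (Hpk : (2^k >= 2)%nat).
  { replace k with (S (k-1)) by lia. rewrite Nat.pow_succ_r'. pose proof (Nat.pow_nonzero 2 (k-1)). lia. }
  assert (Hsp : 0 < IZR (2 * s)).
  { assert (A : (Xt H 1 < Xt H 2)%Z) by (apply (Xt_lt H (2^k)); auto; lia).
    destruct (Pt_bound H 1 ltac:(lia) ltac:(lia)). destruct (Pt_bound H 2 ltac:(lia) ltac:(lia)).
    apply IZR_lt. unfold s. lia. }
  assert (Hs0 : 0 <= IZR s).
  { rewrite mult_IZR in Hsp. lra. }
  set (Q := (k*k/8 + 2)%nat).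
  assert (HQ : IZR (2 * s) < 2^Q).
  { assert (HX : X8 <= INR (k*k/8 + 1)).
    { pose proof (Nat.div_mod_eq (k*k) 8). pose proof (Nat.mod_upper_bound (k*k) 8 ltac:(lia)).
      assert (Hn : (k*k <= 8 * (k*k/8+1))%nat) by lia.
      apply le_INR in Hn. rewrite !mult_INR in Hn. unfold X8.
      replace (INR 8) with 8 in Hn by (simpl; lra).
      replace (INR k * (/ 8 * INR k)) with (INR k * INR k / 8) by field. lra. }
    assert (Rpower 2 X8 <= 2^(k*k/8+1)).
    { rewrite <- Rpower_pow by lra. apply Rle_Rpower; lra. }
    rewrite mult_IZR. unfold Q. replace (k * k / 8 + 2)%nat with (S (k*k/8+1)) by lia.
    rewrite <- tech_pow_Rmult. lra. }
  set (K := (2^(k - r - 1))%nat).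
  set (Mf := fun t : nat => (2^(k - t - (r+4)))%nat).
  set (ef := fun t : nat => (k - t - (3*r+5))%nat).
  assert (Hpar : forall t, (t < T)%nat -> (t + 2 <= k)%nat /\ (1 <= Mf t)%nat /\ (2^(t+3) * Mf t = K)%nat /\
        IZR (2 * s) < (1 + / 2^(ef t))^(Mf t - 1)).
  { intros t Ht. split; [lia|]. split.
    { unfold Mf. pose proof (Nat.pow_nonzero 2 (k - t - (r+4))). lia. }
    split.
    { unfold Mf, K. rewrite <- Nat.pow_add_r. f_equal. lia. }
    apply (Rlt_le_trans _ _ _ HQ). apply bern2.
    unfold Mf, ef.
    assert (E : (2^(k - t - (r+4)) = 2^(k - t - (3*r+5)) * (2 * 2^(2*r)))%nat).
    { rewrite <- Nat.pow_succ_r', <- Nat.pow_add_r. f_equal. lia. }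
    rewrite E.
    assert (HQ2 : (Q <= 2^(2*r))%nat).
    { assert (E2 : (2^(2*r) = 2^r * 2^r)%nat) by (rewrite <- Nat.pow_add_r; f_equal; lia).
      rewrite E2. assert (k * k < 2^r * 2^r)%nat by (apply Nat.mul_lt_mono; lia).
      pose proof (Nat.div_mod_eq (k*k) 8). unfold Q. nia. }
    set (P1 := (2^(k - t - (3*r+5)))%nat). set (P2 := (2^(2*r))%nat).
    assert (1 <= P1)%nat by (unfold P1; pose proof (Nat.pow_nonzero 2 (k - t - (3*r+5))); lia).
    assert (1 <= P2)%nat by (unfold P2; pose proof (Nat.pow_nonzero 2 (2*r)); lia).
    nia. }
  destruct (iterate H k T K Mf ef Hs Hl Hh ltac:(lia) Hsp Hpar T (le_n T)) as [V [HV1 [HV2 HSt]]].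
  rewrite Nat.sub_diag in HV1, HSt.
  assert (Hpos : (4*V + 1 <= 2^k)%nat).
  { assert (E1 : (2^k = 4 * 2^(k-2))%nat) by (change 4%nat with (2^2)%nat; rewrite <- Nat.pow_add_r; f_equal; lia).
    assert (E2 : (2^(T+2) <= 2^(k-2))%nat) by (apply Nat.pow_le_mono_r; lia).
    assert (E3 : (2^k = 2 * K * 2^r)%nat).
    { unfold K. rewrite <- Nat.pow_succ_r', <- Nat.pow_add_r. f_equal. lia. }
    assert (E4 : (2 * T < 2^r)%nat) by lia.
    assert (E5 : (T * K <= 2^(k-2))%nat) by nia.
    pose proof (Nat.pow_nonzero 2 (k-2)). simpl in HV1. lia. }
  specialize (HSt V (le_n V)).
  replace (2^(0+2))%nat with 4%nat in HSt by reflexivity.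
  replace (2^0)%nat with 1%nat in HSt by reflexivity.
  specialize (HSt Hpos).
  pose proof (top H k V Hs Hl HV2 Hpos) as Htop. fold s in Htop.
  set (G := Gf ef T T) in *.
  assert (HG : (k*k + 8 <= 4 * G)%nat).
  { apply (final_ineq k r T G); try lia.
    apply (Gclosed ef k T (3*r+5) (Gf ef T)); auto; try lia. }
  assert (H2G : 2^G <= IZR (2*s) * IZR (2*s)).
  { change (size H) with s in HSt. assert (2^G / IZR (2*s) <= IZR (2*s)) by lra.
    apply (Rmult_le_compat_r (IZR (2*s))) in H0; [|lra].
    unfold Rdiv in H0. rewrite Rmult_assoc, Rinv_l in H0 by lra. lra. }
  assert (HGr : X8 + X8 + INR 2 <= INR G).
  { apply le_INR in HG. rewrite plus_INR, !mult_INR in HG. unfold X8.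
    replace (INR 8) with 8 in HG by (simpl; lra). replace (INR 4) with 4 in HG by (simpl; lra).
    rewrite INR2. lra. }
  assert (Hfin : Rpower 2 X8 * Rpower 2 X8 * 2^2 <= 2^G).
  { rewrite <- (Rpower_pow 2 2) by lra. rewrite <- !Rpower_plus, <- (Rpower_pow G 2) by lra.
    apply Rle_Rpower; lra. }
  rewrite mult_IZR in H2G.
  assert (IZR s * IZR s < Rpower 2 X8 * Rpower 2 X8).
  { apply Rmult_le_0_lt_compat; lra. }
  nra.
Qed.
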